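(* (a) There are $2^{\mathfrak c}$ ultrafilters $x\in\beta\mathbb{N}$ that are not on finite levels, i.e. $x\notin\bigcup_{i=0}^\infty\overline{L_i}$. (b) There are $2^{\mathfrak c}$ ultrafilters that are irreducible in $\beta\mathbb{N}$ and not on finite levels. (c) $\bigcup_{i=0}^\infty\overline{L_i}\neq\overline{\bigcup_{i=0}^\infty L_i}$.
   Context: $\mathbb{N}=\{1,2,3,\dots\}$; $\beta\mathbb{N}$ is the set of ultrafilters on $\mathbb{N}$ (Stone–Čech compactification, naturals identified with principal ultrafilters), with multiplication: $A\in xy$ iff $\{n:A/n\in y\}\in x$, $A/n=\{m:mn\in A\}$. For $A\subseteq\mathbb{N}$, $\overline{A}=\{x\in\beta\mathbb{N}:A\in x\}$. $P$ is the set of primes, $L_0=\{1\}$, $L_n=\{a_1\cdots a_n:a_i\in P\}$. An ultrafilter is on a finite level if it lies in $\overline{L_i}$ for some $i\ge0$. $\mathfrak c=|\mathbb{R}|$. Irreducible: not of the form $yz$ with $y,z\in\beta\mathbb{N}\setminus\{1\}$. *)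

(* Defs.v *)
From Stdlib Require Import PArith Reals.
From mathcomp Require Import all_boot.
From mathcomp Require Import boolp classical_sets.

Set Implicit Arguments.
Unset Strict Implicit.
Unset Printing Implicit Defensive.
Local Open Scope classical_set_scope.

(* N = {1,2,3,...} is represented by the type [positive]. *)

Definition ultrafilter (x : set (set positive)) : Prop :=
  [/\ x setT,
      ~ x set0,
      (forall A B, x A -> x B -> x (A `&` B)),
      (forall A B, A `<=` B -> x A -> x B)
    & (forall A, x A \/ x (~` A))].

(* Principal ultrafilter at n (naturals are identified with these). *)
Definition principal (n : positive) : set (set positive) := [set A | A n].

Definition divset (A : set positive) (n : positive) : set positive :=
  [set m | A (m * n)%positive].

Definition umul (x y : set (set positive)) : set (set positive) :=
  [set A | x [set n | y (divset A n)]].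

(* closure \overline{A} = {x in beta N : A \in x} *)
Definition ubar (A : set positive) : set (set (set positive)) :=
  [set x | ultrafilter x /\ x A].

Definition primes_set : set positive := [set p | prime (Pos.to_nat p)].

Fixpoint L (n : nat) : set positive :=
  match n with
  | O => [set 1%positive]
  | S k => [set m | exists p a, [/\ primes_set p, L k a & m = (p * a)%positive]]
  end.

Definition on_finite_level (x : set (set positive)) : Prop :=
  exists i : nat, x (L i).

Definition irreducible (x : set (set positive)) : Prop :=
  ~ exists y z, [/\ ultrafilter y, ultrafilter z,
                    y <> principal 1%positive, z <> principal 1%positive
                  & x = umul y z].

(* The class {x | P x} of ultrafilters has cardinality 2^c = |P(R)|:
   an explicit bijection between the power set of R and {x | P x}. *)
Definition has_card_2c (P : set (set (set positive))) : Prop :=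
  exists f : set R -> set (set positive),
    [/\ injective f, (forall S, P (f S)) & (forall x, P x -> exists S, f S = x)].

(* Main.v *)
Require Import Defs.
From Stdlib Require Import PArith Reals Lia Lra ZArith.
From mathcomp Require Import all_boot.
From mathcomp Require Import boolp classical_sets functions cardinality filter.
Set Implicit Arguments.
Local Open Scope classical_set_scope.

Fixpoint q (k : nat) : nat :=
  match k with O => 2 | S k => sval (prime_above (q k)) end.

Lemma q_prime k : prime (q k).
Proof. by case: k => [|k] //=; case: prime_above. Qed.

Lemma q_inj : injective q.
Proof.
have mono : {homo q : i j / i < j}.
  apply: homo_ltn; first exact: ltn_trans.
  by move=> i /=; case: prime_above.
move=> m n e; case: (ltngtP m n) => // /mono; rewrite e ltnn //.
Qed.

Definition an (k : nat) : nat := q k ^ k.+1.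
Definition a (k : nat) : positive := Pos.of_nat (an k).

Lemma an_gt0 k : 0 < an k.
Proof. by rewrite /an expn_gt0 prime_gt0 // q_prime. Qed.

Lemma a_nat k : Pos.to_nat (a k) = an k.
Proof. rewrite /a Nat2Pos.id //; have := an_gt0 k; by case: (an k). Qed.

Definition Aset : set positive := [set m | exists k, m = a k].

Lemma pos_mul_nat (m n : positive) : Pos.to_nat (m * n) = (Pos.to_nat m * Pos.to_nat n)%N.
Proof. by rewrite Pos2Nat.inj_mul multE. Qed.

Lemma pos_gt0 (m : positive) : (0 < Pos.to_nat m)%N.
Proof. by apply/ltP; apply: Pos2Nat.is_pos. Qed.

Lemma KP (n u v : positive) : n <> 1%positive -> Aset (u * n)%positive -> Aset (v * n)%positive -> u = v.
Proof.
move=> n1 [k ek] [j ej].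
have N1 : (1 < Pos.to_nat n)%N.
  have := pos_gt0 n; rewrite leq_eqVlt => /orP[/eqP h|//].
  by exfalso; apply: n1; apply: Pos2Nat.inj; rewrite -h.
have [p pp pn] := pdivP N1.
have H1 : forall w k, (w * n)%positive = a k -> p = q k.
  move=> w i e.
  have : (p %| an i)%N.
    by rewrite -a_nat -e pos_mul_nat dvdn_mull.
  rewrite /an Euclid_dvdX // => /andP[hd _].
  apply/(prime_nt_dvdP (q_prime i)) => //.
  by rewrite neq_ltn prime_gt1 ?orbT.
have kj : k = j by apply: q_inj; rewrite -(H1 _ _ ek) -(H1 _ _ ej).
subst j.
apply: Pos2Nat.inj; apply/eqP.
rewrite -(eqn_pmul2r (pos_gt0 n)) -!pos_mul_nat ek ej //.
Qed.

Lemma L_pow i (m : positive) : L i m -> forall p k, prime p -> Pos.to_nat m = (p ^ k)%N -> i = k.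
Proof.
elim: i m => [|i IH] m /=.
  move=> -> p [|k] pp; rewrite Pos2Nat.inj_1 => // /esym/eqP.
  by rewrite expnS muln_eq1 (gtn_eqF (prime_gt1 pp)).
move=> [p' [a' [pp' La' ->]]] p k pp.
rewrite pos_mul_nat => e.
have dv : (Pos.to_nat p' %| p ^ k)%N by rewrite -e dvdn_mulr.
have ep : Pos.to_nat p' = p.
  move: dv; rewrite Euclid_dvdX // => /andP[hd _].
  apply/(prime_nt_dvdP pp) => //.
  by rewrite neq_ltn prime_gt1 ?orbT.
case: k e dv => [|k] e _.
  by exfalso; move: e; rewrite ep expn0 => /eqP; rewrite muln_eq1 (gtn_eqF (prime_gt1 pp)).
congr S; apply: (IH a' La' p k pp).
apply/eqP; rewrite -(eqn_pmul2l (prime_gt0 pp)) -expnS -e ep //.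
Qed.

Lemma AL i u v : Aset u -> Aset v -> L i u -> L i v -> u = v.
Proof.
move=> [k ->] [j ->] Lk Lj.
have e1 := @L_pow i _ Lk _ _ (q_prime k) (a_nat k).
have e2 := @L_pow i _ Lj _ _ (q_prime j) (a_nat j).
by have -> : k = j by rewrite -[k]/(k.+1.-1) -e1 e2.
Qed.
Arguments AL {i u v}.
Arguments KP {n u v}.

Definition nosing (x : set (set positive)) := forall m, ~ x [set m].

Lemma small x B : ultrafilter x -> nosing x -> x B ->
  (forall b b', B b -> B b' -> b = b') -> False.
Proof.
move=> [xT x0 xI xS xC] ns xB BB.
have [[b Bb]|B0] := pselect (exists b, B b).
  apply: (ns b); apply: xS xB => c Bc; exact: BB.
apply: x0; apply: xS xB => c Bc; apply: B0; by exists c.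
Qed.

Arguments small {x B}.

Lemma sing_principal z m : ultrafilter z -> z [set m] -> z = principal m.
Proof.
move=> [zT z0 zI zS zC] zm; apply/funext => C; apply/propext; split.
  move=> zc; rewrite /principal /=; apply: contrapT => Cm.
  apply: z0; have := zI _ _ zm zc; apply: zS => c [-> //].
by move=> Cm; apply: zS zm => c ->.
Qed.

Arguments sing_principal {z m}.

Lemma good_irr x : ultrafilter x -> nosing x -> x Aset -> irreducible x /\ ~ on_finite_level x.
Proof.
move=> ux ns xA; have ux' := ux; case: ux' => [xT x0 xI xS xC].
split; last first.
  move=> [i xL]; apply: (small ux ns (xI _ _ xA xL)).
  by move=> b b' [Ab Lb] [Ab' Lb']; apply: (AL Ab Ab' Lb Lb').
move=> [y [z [uy uz y1 z1 exy]]].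
have [[m zm]|nz] := pselect (exists m, z [set m]).
  have ez := sing_principal uz zm.
  have m1 : m <> 1%positive by move=> e; apply: z1; rewrite ez e.
  have xM : x [set k | exists j, k = (j * m)%positive].
    rewrite exy /umul /=; case: uy => yT _ _ yS _; apply: yS yT => n _.
    by rewrite ez /principal /divset /=; exists n; rewrite Pos.mul_comm.
  apply: (small ux ns (xI _ _ xA xM)) => b b' [Ab [j eb]] [Ab' [j' eb']]; subst b b'.
  by rewrite (KP m1 Ab Ab').
have := xA; rewrite exy /umul /= => yS.
case: uy => yT y0 yI ySS yC.
have y1' : y [set 1%positive].
  apply: ySS yS => n zn; apply: contrapT => n1.
  apply: (small uz _ zn) => [k zk|b b' Ab Ab'].
    by apply: nz; exists k.
  by apply: (KP n1 Ab Ab').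
by apply: y1; apply: sing_principal.
Qed.

Section RealPart.
Local Open Scope R_scope.

Definition qv (k : nat * nat * nat) : R :=
  (INR k.1.1 - INR k.1.2) / (INR k.2 + 1).

Lemma Z2Nat_neg z : (z <= 0)%Z -> Z.to_nat z = 0%N.
Proof. by case: z => // p h; exfalso; lia. Qed.

Lemma IZR_le_INR z : IZR z <= INR (Z.to_nat z).
Proof.
destruct (Z_le_gt_dec 0 z) as [h|h].
  by rewrite INR_IZR_INZ Z2Nat.id //; apply: Rle_refl.
rewrite Z2Nat_neg; last by lia.
simpl; apply: IZR_le; lia.
Qed.

Lemma IZR_split z : IZR z = INR (Z.to_nat z) - INR (Z.to_nat (- z)).
Proof.
destruct (Z_le_gt_dec 0 z) as [h|h].
  rewrite (@Z2Nat_neg (- z)%Z); last by lia.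
  rewrite INR_IZR_INZ Z2Nat.id //=; lra.
rewrite (@Z2Nat_neg z); last by lia.
rewrite [INR (Z.to_nat _)]INR_IZR_INZ Z2Nat.id; last by lia.
rewrite opp_IZR /=; lra.
Qed.

Lemma dense_qv r s : r < s -> exists k, r < qv k < s.
Proof.
move=> rs.
have v0 : 0 < / (s - r) by apply: Rinv_0_lt_compat; lra.
have [h1 _] := archimed (/ (s - r)).
have h2 := IZR_le_INR (up (/ (s - r))).
set c := Z.to_nat (up (/ (s - r))) in h2.
set d := INR c + 1.
have d0 : 0 < d by rewrite /d; have := pos_INR c; lra.
have ds : 1 < d * (s - r).
  have : / (s - r) < d by rewrite /d; lra.
  move=> h; have := Rmult_lt_compat_r (s - r) _ _ ltac:(lra) h.
  by rewrite Rinv_l; [lra|lra].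
have [h3 h4] := archimed (r * d).
set m := up (r * d) in h3 h4.
exists (Z.to_nat m, Z.to_nat (- m), c).
rewrite /qv /= -/d -IZR_split.
split.
  replace r with ((r * d) * / d) by (field; lra).
  apply: Rmult_lt_compat_r; first by apply: Rinv_0_lt_compat.
  lra.
replace s with ((s * d) * / d) by (field; lra).
apply: Rmult_lt_compat_r; first by apply: Rinv_0_lt_compat.
lra.
Qed.

Definition beta (r : R) (k : nat * nat * nat) : bool := `[< qv k < r >].

Lemma beta_inj : injective beta.
Proof.
have key : forall r r', r < r' -> beta r <> beta r'.
  move=> r r' h e; have [k [k1 k2]] := dense_qv h.
  have := congr1 (fun f => f k) e; rewrite /beta /=.
  rewrite asboolF; last by lra.
  by rewrite asboolT.
move=> r r' e; case: (Rtotal_order r r') => [h|[//|h]].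
  by case: (key _ _ h).
by case: (key _ _ h).
Qed.

Definition term (B : set nat) (n : nat) : R := if `[< B n >] then (/3) ^ n else 0.

Fixpoint ps (B : set nat) (N : nat) : R :=
  match N with O => 0 | S N => ps B N + term B N end.

Lemma pow3_pos n : 0 < (/3) ^ n.
Proof. apply: pow_lt; apply: Rinv_0_lt_compat; lra. Qed.

Lemma term_ge0 B n : 0 <= term B n.
Proof. rewrite /term; case: ifP => _; [have := pow3_pos n|]; lra. Qed.

Lemma term_le B n : term B n <= (/3) ^ n.
Proof. rewrite /term; case: ifP => _; have := pow3_pos n; lra. Qed.

Lemma ps_bound B N : ps B N <= 3/2 * (1 - (/3) ^ N).
Proof.
elim: N => [|N IH] /=; first lra.
have := term_le B N; have := pow3_pos N; lra.
Qed.

Lemma ps_mono B N M : (N <= M)%N -> ps B N <= ps B M.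
Proof.
move=> /subnKC <-; elim: (M - N)%N => [|k IH]; first by rewrite addn0; lra.
rewrite addnS /=; have := term_ge0 B (N + k)%N; lra.
Qed.

Lemma ps_bounded B : bound (fun y => exists N, y = ps B N).
Proof.
exists (3/2) => y [N ->]; have := ps_bound B N; have := pow3_pos N; lra.
Qed.

Lemma ps_ex B : exists y, (fun y => exists N, y = ps B N) y.
Proof. by exists (ps B 0); exists 0%N. Qed.

Definition hs (B : set nat) : R := proj1_sig (completeness _ (ps_bounded B) (ps_ex B)).

Lemma hs_ge B N : ps B N <= hs B.
Proof.
rewrite /hs; case: completeness => m [ub _] /=; apply: ub; by exists N.
Qed.

Lemma hs_le B M : (forall N, ps B N <= M) -> hs B <= M.
Proof.
move=> h; rewrite /hs; case: completeness => m [_ lub] /=; apply: lub.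
by move=> y [N ->].
Qed.

Lemma ps_eq B B' N : (forall k, (k < N)%N -> term B k = term B' k) -> ps B N = ps B' N.
Proof.
elim: N => [|N IH] h //=.
rewrite IH ?h //; move=> k kN; apply: h; exact: ltnW.
Qed.

Lemma tail B n m : `[< B n >] = false ->
  ps B (n.+1 + m) <= ps B n + (/3) ^ n / 2 - (/3) ^ (n + m) / 2.
Proof.
move=> Bn; elim: m => [|m IH].
  rewrite addn0 addn0 /= /term Bn; lra.
have t := term_le B (n.+1 + m).
rewrite !addSn in IH t.
rewrite addSn addnS.
change (ps B (n + m).+1 + term B (n + m).+1 <=
  ps B n + (/ 3) ^ n / 2 - (/ 3) * (/ 3) ^ (n + m) / 2).
change ((/ 3) ^ (n + m).+1) with ((/ 3) * (/ 3) ^ (n + m)) in t.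
lra.
Qed.

Lemma key_hs B B' n : `[< B n >] = true -> `[< B' n >] = false ->
  ps B n = ps B' n -> hs B' < hs B.
Proof.
move=> Bn B'n e.
have h1 : ps B n.+1 <= hs B by apply: hs_ge.
have h2 : hs B' <= ps B' n + (/3) ^ n / 2.
  apply: hs_le => N.
  case: (leqP N n.+1) => hN.
    have := @ps_mono B' _ _ hN; rewrite /= /term B'n.
    have := pow3_pos n; lra.
  
  have [m ->] : exists m, N = (n.+1 + m)%N by exists (N - n.+1)%N; rewrite subnKC // ltnW.
  have := @tail B' n m B'n; have := pow3_pos (n + m); lra.
move: h1; rewrite /= /term Bn e; have := pow3_pos n; lra.
Qed.

Lemma hs_inj : injective hs.
Proof.
move=> B B' e; apply: contrapT => ne.
have ex : exists n, `[< B n >] != `[< B' n >].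
  apply: contrapT => h; apply: ne; apply/funext => n; apply/propext.
  have : `[< B n >] = `[< B' n >] by apply: contrapT => h'; apply: h; exists n; apply/eqP.
  by move=> /(congr1 (fun b => is_true b)); rewrite !asboolE => ->.
case: (ex_minnP ex) => n hn hmin.
have pe : ps B n = ps B' n.
  apply: ps_eq => k kn; rewrite /term.
  have : `[< B k >] = `[< B' k >].
    apply: contrapT => h; have := hmin k (introN eqP h).
    by rewrite leqNgt kn.
  by move=> ->.
move: hn; case eB : `[< B n >]; case eB' : `[< B' n >] => // _.
  by have := @key_hs B B' n eB eB' pe; rewrite e; lra.
by have := @key_hs B' B n eB' eB (esym pe); rewrite e; lra.
Qed.

Definition hp (B : set positive) : R := hs (fun n => B (Pos.of_nat n)).

Lemma hp_inj : injective hp.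
Proof.
move=> B B' /hs_inj e; apply/funext => p.
by have := congr1 (fun f => f (Pos.to_nat p)) e; rewrite /= Pos2Nat.id.
Qed.

Definition gbig (x : set (set positive)) : set R := [set r | exists B, x B /\ r = hp B].

Lemma gbig_inj : injective gbig.
Proof.
have sub : forall x x', gbig x = gbig x' -> forall B, x B -> x' B.
  move=> x x' e B xB.
  have : gbig x' (hp B) by rewrite -e; exists B.
  by move=> [B' [x'B' /hp_inj ->]].
move=> x x' e; apply/funext => B; apply/propext; split; apply: sub => //.
Qed.

End RealPart.

Definition K := (nat * nat * nat)%type.
Definition T := (seq K * seq (seq bool) * nat)%type.

Definition X (f : K -> bool) : set T := [set t | map f t.1.1 \in t.1.2].

Definition atom (S : set R) (c : R + T) : set T :=
  match c with
  | inl r => if `[< S r >] then X (beta r) else ~` X (beta r)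
  | inr t => ~` [set t]
  end.

Definition base (S : set R) (l : list (R + T)) : set T :=
  [set t | forall c, List.In c l -> atom S c t].

Lemma sep_cat (p n : K -> bool) F G :
  map p F <> map n F -> map p (F ++ G) <> map n (F ++ G) /\ map p (G ++ F) <> map n (G ++ F).
Proof.
move=> ne; split => e; apply: ne.
  have := congr1 (take (size F)) e.
  by rewrite !map_cat !take_size_cat ?size_map.
have := congr1 (drop (size G)) e.
by rewrite !map_cat !drop_size_cat ?size_map.
Qed.

Lemma sep_one (p : K -> bool) (N : list (K -> bool)) :
  (forall n, List.In n N -> p <> n) ->
  exists F, forall n, List.In n N -> map p F <> map n F.
Proof.
elim: N => [|n N IH] h; first by exists [::].
have [F hF] := IH (fun n' i => h n' (or_intror i)).
have [k hk] : exists k, p k <> n k.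
  apply: contrapT => hh; apply: (h n (or_introl erefl)); apply/funext => k.
  by apply: contrapT => hk; apply: hh; exists k.
exists (k :: F) => n' [<-|i] /=.
  by case => /hk.
by case => _ /(hF _ i).
Qed.

Lemma sep_all (P N : list (K -> bool)) :
  (forall p n, List.In p P -> List.In n N -> p <> n) ->
  exists F, forall p n, List.In p P -> List.In n N -> map p F <> map n F.
Proof.
elim: P => [|p P IH] h; first by exists [::].
have [F1 h1] := IH (fun p' n' i => h p' n' (or_intror i)).
have [F2 h2] := @sep_one p N (fun n' i => h p n' (or_introl erefl) i).
exists (F2 ++ F1) => p' n' [<-|i] j.
  by case: (@sep_cat p n' F2 F1 (h2 _ j)).
by case: (@sep_cat p' n' F1 F2 (h1 _ _ i j)).
Qed.

Lemma in_mapP (F : seq K) (P : list (K -> bool)) p :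
  List.In p P -> map p F \in [seq map p' F | p' <- P].
Proof.
elim: P => [|p' P IH] //= [->|i]; first by rewrite inE eqxx.
by rewrite inE IH ?orbT.
Qed.

Lemma in_mapP' (F : seq K) (P : list (K -> bool)) s :
  s \in [seq map p' F | p' <- P] -> exists p, List.In p P /\ s = map p F.
Proof.
elim: P => [|p' P IH] //=; rewrite inE => /orP[/eqP ->|/IH [p [i ->]]].
  by exists p'; split; [left|].
by exists p; split; [right|].
Qed.

Lemma snd_le (ts : list T) t : List.In t ts -> (t.2 <= sumn [seq u.2 | u <- ts])%N.
Proof.
elim: ts => [|u ts IH] //= [->|i]; first exact: leq_addr.
by apply: leq_trans (IH i) _; exact: leq_addl.
Qed.

Lemma base_ne S l : base S l !=set0.
Proof.
pose P := List.flat_map (fun c => match c with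
  | inl r => if `[< S r >] then [:: beta r] else [::] | inr _ => [::] end) l.
pose N := List.flat_map (fun c => match c with
  | inl r => if `[< S r >] then [::] else [:: beta r] | inr _ => [::] end) l.
pose ts := List.flat_map (fun c => match c with
  | inl _ => [::] | inr t => [:: t] end) l.
have hP : forall p, List.In p P -> exists r, S r /\ p = beta r.
  move=> p /List.in_flat_map [[r|t] [_]] //.
  case: ifP => [/asboolP Sr|_] //= [<-|//]; by exists r.
have hN : forall p, List.In p N -> exists r, ~ S r /\ p = beta r.
  move=> p /List.in_flat_map [[r|t] [_]] //.
  case: ifP => [//|/asboolPn Sr] /= [<-|//]; by exists r.
have [F hF] : exists F, forall p n, List.In p P -> List.In n N -> map p F <> map n F.
  apply: sep_all => p n /hP [r [Sr ->]] /hN [r' [Sr' ->]] /beta_inj e.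
  by apply: Sr'; rewrite -e.
pose k0 := (sumn [seq u.2 | u <- ts]).+1.
exists (F, [seq map p F | p <- P], k0) => c lc.
case: c lc => [r|t] lc /=.
  case: ifP => [/asboolP Sr|/asboolPn Sr]; rewrite /X /=.
    apply: in_mapP; apply/List.in_flat_map; exists (inl r); split => //.
    by rewrite asboolT //; left.
  move=> /in_mapP' [p [ip e]].
  have iN : List.In (beta r) N.
    apply/List.in_flat_map; exists (inl r); split => //.
    by rewrite asboolF //; left.
  exact: (hF _ _ ip iN (esym e)).
move=> et.
have it : List.In t ts by apply/List.in_flat_map; exists (inr t); split => //; left.
have := @snd_le ts t it; rewrite -et /= /k0 ltnn //.
Qed.

Lemma proper_base S : ProperFilter (filter_from setT (base S)).
Proof.
apply: filter_from_proper; last by move=> i _; apply: base_ne.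
apply: filter_fromT_filter; first by exists [::].
move=> i j; exists (i ++ j) => t h; split => c lc; apply: h;
  apply/List.in_or_app; by [left|right].
Qed.

Lemma ultra_ex S : exists G : set_system T, UltraFilter G /\ forall c, G (atom S c).
Proof.
have [G [UG sub]] := ultraFilterLemma (proper_base S).
exists G; split => // c; apply: sub; exists [:: c] => // t h; by apply: h; left.
Qed.

Definition U S := proj1_sig (cid (ultra_ex S)).

Lemma U_ultra S : UltraFilter (U S).
Proof. by rewrite /U; case: cid => G [] /=. Qed.

Lemma U_atom S c : U S (atom S c).
Proof. by rewrite /U; case: cid => G [] /=. Qed.

Lemma U_not0 S : ~ U S set0.
Proof. exact: (@filter_not_empty T (U S) (@ultra_proper _ _ (U_ultra S))). Qed.

Lemma US_S S (P Q : set T) : P `<=` Q -> U S P -> U S Q.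
Proof. have UF := U_ultra S; exact: filterS. Qed.

Lemma US_I S (P Q : set T) : U S P -> U S Q -> U S (P `&` Q).
Proof. have UF := U_ultra S; exact: filterI. Qed.

Arguments US_S {S P Q}.
Arguments US_I {S P Q}.

Lemma US_T S : U S setT.
Proof. have UF := U_ultra S; exact: filterT. Qed.

Lemma US_C S (P : set T) : U S P \/ U S (~` P).
Proof. exact: in_ultra_setVsetC (U_ultra S). Qed.

Lemma an_inj : injective an.
Proof.
move=> k j e; apply: q_inj.
have : (q k %| an j)%N by rewrite -e /an dvdn_exp.
rewrite /an Euclid_dvdX ?q_prime // => /andP[hd _].
apply/(prime_nt_dvdP (q_prime j)) => //.
by rewrite neq_ltn prime_gt1 ?orbT // q_prime.
Qed.

Lemma a_inj : injective a.
Proof. by move=> k j e; apply: an_inj; rewrite -!a_nat e. Qed.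

Definition e (t : T) : positive := a (pickle t).

Lemma e_inj : injective e.
Proof. by move=> t t' /a_inj; apply: (pcan_inj pickleK). Qed.

Definition xS S : set (set positive) := [set B | U S (e @^-1` B)].

Lemma xS_ultra S : ultrafilter (xS S).
Proof.
split.
- by rewrite /xS /=; apply: (@US_S S setT _) => //; apply: US_T.
- move=> h; apply: (@U_not0 S); apply: US_S h; by move=> t.
- by move=> A B hA hB; have := US_I hA hB; apply: US_S => t.
- by move=> A B AB hA; apply: US_S hA => t /AB.
- move=> A; case: (US_C S (e @^-1` A)) => h; [left|right].
    by [].
  by apply: US_S h.
Qed.

Lemma xS_A S : xS S Aset.
Proof.
have UF := U_ultra S; rewrite /xS /=; apply: (@US_S S setT _); last by apply: US_T.
move=> t _.
by exists (pickle t).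
Qed.

Lemma xS_nosing S : nosing (xS S).
Proof.
move=> m; rewrite /xS /= => h.
have [[t et]|nt] := pselect (exists t, e t = m).
  have h1 : U S [set t].
    apply: US_S h => t' /= et'; apply: e_inj; by rewrite et et'.
  have h2 := U_atom S (inr t).
  apply: (@U_not0 S); have := US_I h1 h2.
  by apply: US_S => t' [].
apply: (@U_not0 S); apply: US_S h => t' /= et'.
by apply: nt; exists t'.
Qed.

Lemma xS_sep S S' r : S r -> ~ S' r -> xS S <> xS S'.
Proof.
move=> Sr S'r eq.
have h1 : U S (X (beta r)) by have := U_atom S (inl r); rewrite /= asboolT.
have h2 : U S' (~` X (beta r)) by have := U_atom S' (inl r); rewrite /= asboolF.
have h3 : xS S (e @` X (beta r)) by rewrite /xS /=; apply: US_S h1 => t Xt; exists t.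
rewrite eq /xS /= in h3.
have h4 : U S' (X (beta r)) by apply: US_S h3 => t /= [t' Xt' /e_inj <-].
apply: (@U_not0 S'); have := US_I h4 h2.
by apply: US_S => t [].
Qed.

Lemma xS_inj : injective xS.
Proof.
move=> S S' eq; apply: contrapT => ne.
have [r hr] : exists r, ~ (S r <-> S' r).
  apply: contrapT => h; apply: ne; apply/funext => r; apply/propext.
  by apply: contrapT => h'; apply: h; exists r.
have [Sr|nSr] := pselect (S r).
  by apply: (@xS_sep S S' r Sr _ eq) => S'r; apply: hr.
have S'r : S' r by apply: contrapT => h; apply: hr; split.
by apply: (@xS_sep S' S r S'r nSr (esym eq)).
Qed.

Local Open Scope card_scope.

Lemma card_from (C : set (set (set positive))) (f : set R -> set (set positive))
  (g : set (set positive) -> set R) :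
  injective f -> (forall S, C (f S)) -> injective g -> has_card_2c C.
Proof.
move=> fi fC gi.
have h1 : [set: set R] #<= C.
  apply/pcard_leP; apply/injfunPex; exists f; first by move=> S _; exact: fC.
  by move=> a b _ _; exact: fi.
have h2 : C #<= [set: set R].
  by apply/pcard_injP; exists g => a b _ _; exact: gi.
have /card_set_bijP[F [F1 F2 F3]] := Cantor_Bernstein h1 h2.
exists F; split.
- by move=> a b; apply: F2; rewrite in_setE.
- by move=> S; apply: F1.
- by move=> x /F3[S _ <-]; exists S.
Qed.

Lemma pow_L (p : nat) j : prime p -> L j (Pos.of_nat (p ^ j)).
Proof.
move=> pp; have p0 : p <> 0%N by move=> e; move: pp; rewrite e.
elim: j => [|j IH] //=.
exists (Pos.of_nat p), (Pos.of_nat (p ^ j)); split => //.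
  by change (is_true (prime (Pos.to_nat (Pos.of_nat p)))); rewrite Nat2Pos.id.
rewrite expnS mulnE Nat2Pos.inj_mul //.
have : (0 < p ^ j)%N by rewrite expn_gt0 prime_gt0.
by case: (p ^ j)%N.
Qed.

Lemma xS_props S : ultrafilter (xS S) /\ irreducible (xS S) /\ ~ on_finite_level (xS S).
Proof.
split; first exact: xS_ultra.
exact: good_irr (xS_ultra S) (@xS_nosing S) (xS_A S).
Qed.

Theorem lemma3p1 :
  [/\ has_card_2c [set x | ultrafilter x /\ ~ on_finite_level x],
      has_card_2c [set x | ultrafilter x /\ irreducible x /\ ~ on_finite_level x]
    & \bigcup_(i in [set: nat]) ubar (L i) <> ubar (\bigcup_(i in [set: nat]) L i)].
Proof.
split.
- apply: (@card_from _ xS gbig xS_inj _ gbig_inj) => S.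
  by have [h1 [_ h3]] := xS_props S.
- exact: (@card_from _ xS gbig xS_inj xS_props gbig_inj).
- move=> eq.
  have [u [_ nf]] := xS_props set0.
  have hx : ubar (\bigcup_(i in [set: nat]) L i) (xS set0).
    split => //; case: u => _ _ _ uS _; apply: uS (xS_A set0) => m [k ->].
    exists k.+1 => //; exact: pow_L (q_prime k).
  by rewrite -eq in hx; case: hx => i _ [_ xi]; apply: nf; exists i.
Qed.
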